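(* For any $\epsilon\in(0,1)$ and positive integer $m$, let $(Y_1,\dots,Y_m)\sim\mathcal N(0,\Sigma)$ be jointly Gaussian zero-mean random variables with $0\le\Sigma_{ii}\le\epsilon^2$ for all $i\in[m]$ and $\sum_{i=1}^m\Sigma_{ii}\le1$. Then $\mathbb{E}\max\bigl(0,\max_{i\in[m]}Y_i\bigr)=O\bigl(\epsilon\sqrt{\ln(1/\epsilon)}\bigr)$, where the implied constant does not depend on $m$ or $\Sigma$. *)

(* Defs.v *)
From HB Require Import structures.
From mathcomp Require Import all_boot all_order all_algebra.
From mathcomp Require Import all_classical all_reals all_analysis.
Set Implicit Arguments. Unset Strict Implicit. Unset Printing Implicit Defensive.
Import Order.TTheory GRing.Theory Num.Theory.
Local Open Scope classical_set_scope.
Local Open Scope ring_scope.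

Definition centered_normal_law {R : realType} (v : R) (A : set R) : \bar R :=
  if 0 < v then normal_prob 0 (Num.sqrt v) A else @dirac _ R 0 R A.

(* (Y_1,...,Y_m) ~ N(0, S): the Y i are real random variables on the
   probability space P and every linear combination sum_i a_i Y_i has law
   N(0, a^T S a). *)
Definition gaussian_vector {d} {T : measurableType d} {R : realType}
    (P : probability T R) (m : nat) (Y : 'I_m -> T -> R) (S : 'M[R]_m) : Prop :=
  (forall i, measurable_fun setT (Y i)) /\
  forall (a : 'I_m -> R) (A : set R), measurable A ->
    P ((fun w => \sum_(i < m) a i * Y i w) @^-1` A) =
    centered_normal_law (\sum_(i < m) \sum_(j < m) a i * a j * S i j) A.

(* Main.v *)
Require Import Defs.
From HB Require Import structures.
From mathcomp Require Import all_boot all_order all_algebra.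
From mathcomp Require Import all_classical all_reals all_analysis.
From mathcomp Require Import measurable_realfun.
From mathcomp Require Import ring lra.
Import Order.TTheory GRing.Theory Num.Theory.
Import numFieldTopology.Exports.
Local Open Scope classical_set_scope.
Local Open Scope ring_scope.

Section S.
Context {R : realType}.
Local Notation mu := (@lebesgue_measure R).

Lemma dsq (k x : R) : is_derive x 1 (fun y : R => - k * y ^+ 2) (- k * (2 * x)).
Proof.
have := @is_deriveX R R id 2 x 1 1 (is_derive_id _ _).
move=> h.
have h2 := @is_deriveZ R R R (id ^+ 2) (-k) x 1 _ h.
apply: is_derive_eq.
by rewrite expr1 -scalerA /GRing.scale/= mulr1.
Qed.

Lemma dF (k c x : R) : is_derive x 1 (fun y : R => - c * expR (- k * y ^+ 2))
   (- c * (expR (- k * x ^+ 2) * (- k * (2 * x)))).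
Proof.
have h := @is_derive1_comp R expR (fun y : R => - k * y ^+ 2) x _ _ (is_derive_expR _) (dsq k x).
have h2 := @is_deriveZ R R R _ (-c) x 1 _ h.
apply: is_derive_eq.
by [].
Qed.

Lemma tail_int (s t : R) : 0 < s -> 0 <= t ->
  (\int[mu]_(x in `[t, +oo[) (x * normal_pdf 0 s x)%:E =
   (normal_peak s * s ^+ 2 * expR (- (s ^+ 2 *+ 2)^-1 * t ^+ 2))%:E)%E.
Proof.
move=> s0 t0.
set k := (s ^+ 2 *+ 2)^-1.
set c := normal_peak s * s ^+ 2.
have s0' : s != 0 by rewrite gt_eqF.
have pdfE y : normal_pdf 0 s y = normal_peak s * expR (- k * y ^+ 2).
  rewrite normal_pdfE// /normal_fun subr0 /k.
  by congr (_ * expR _); rewrite !mulNr mulrC.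
have ck : c * (k * 2) = normal_peak s.
  rewrite /c /k -mulr_natr; field.
  by [].
have -> : c * expR (- k * t ^+ 2) = 0 - (- c * expR (- k * t ^+ 2)).
  by ring.
rewrite EFinB.
apply: (@ge0_continuous_FTC2y R (fun x => x * normal_pdf 0 s x) (fun y => - c * expR (- k * y ^+ 2))).
- move=> x tx; rewrite mulr_ge0 ?normal_pdf_ge0//.
  exact: le_trans tx.
  have cf : continuous (fun x : R => x * normal_pdf 0 s x).
    move=> x; apply: cvgM; first exact: cvg_id.
    exact: continuous_normal_pdf.
  exact: continuous_subspaceT cf.
- rewrite -(mulr0 (- c)).
  apply: cvgMr.
  have h1 : (k * x ^+ 2) @[x --> +oo] --> +oo.
    apply: gt0_cvgMry; first by rewrite /k invr_gt0 pmulrn_lgt0// exprn_gt0.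
    exact: cvgr_expr2.
  under eq_fun do rewrite mulNr.
  have h2 := cvg_comp _ _ h1 (@cvgr_expR R). exact: h2.
- by move=> x _; apply: ex_derive; exact: dF.
- apply: cvg_at_right_filter.
  have hd : derivable (fun y : R => - c * expR (- k * y ^+ 2)) t 1.
    by apply: ex_derive; exact: dF.
  exact: (differentiable_continuous ((derivable1_diffP _ _).1 hd)).
- move=> x _; rewrite derive1E derive_val pdfE.
  rewrite -ck /GRing.scale /= !mulr1; ring.
Qed.

Section T.
Local Open Scope ereal_scope.
Lemma normal_density (s : R) (f : R -> \bar R) : (forall x, 0 <= f x) ->
  measurable_fun [set: R] (f : R -> \bar R) ->
  \int[normal_prob 0 s]_x f x = \int[mu]_x (f x * (normal_pdf 0 s x)%:E).
Proof.
move=> f0 mf.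
rewrite -(Radon_Nikodym_SigmaFinite.change_of_variables (normal_prob_dominates 0 s))//.
apply: ae_eq_integral => //.
- apply: emeasurable_funM => //.
  apply: (measurable_int mu).
  exact: Radon_Nikodym_SigmaFinite.f_integrable (normal_prob_dominates 0 s).
- apply: emeasurable_funM => //=; apply/measurable_EFinP.
  exact: measurable_normal_pdf.
- apply: ae_eqe_mul2l => /=.
  apply: integral_ae_eq => //=.
  + exact: Radon_Nikodym_SigmaFinite.f_integrable (normal_prob_dominates 0 s).
  + by apply/measurable_EFinP; exact: measurable_normal_pdf.
  + move=> E _ mE.
    by rewrite -Radon_Nikodym_SigmaFinite.f_integral//; exact: normal_prob_dominates.
Qed.

End T.

Lemma mmax (t : R) : measurable_fun setT (fun x : R => Num.max 0 (x - t)).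
Proof.
have -> : (fun x : R => Num.max 0 (x - t)) = (cst 0) \max (fun x => x - t) by [].
apply: measurable_maxr => //.
exact: measurable_funB.
Qed.

Lemma peak_le (s : R) : 0 < s -> normal_peak s * s ^+ 2 <= s.
Proof.
move=> s0; rewrite /normal_peak mulrC.
have q0 : 0 < Num.sqrt (s ^+ 2 * pi *+ 2).
  by rewrite sqrtr_gt0 pmulrn_lgt0// mulr_gt0 ?exprn_gt0 ?pi_gt0.
rewrite ler_pdivrMr// expr2 ler_pM2l//.
rewrite -[X in X <= _]gtr0_norm// -sqrtr_sqr ler_sqrt; last first.
  by rewrite pmulrn_lge0// mulr_ge0 ?sqr_ge0 ?pi_ge0.
rewrite -mulr_natr -mulrA ler_peMr ?sqr_ge0//.
have := @pi_ge2 R; lra.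
Qed.

Lemma normal_excess (s t : R) : 0 < s -> 0 <= t ->
  (\int[normal_prob 0 s]_x (Num.max 0 (x - t))%:E <=
   (s * expR (- (s ^+ 2 *+ 2)^-1 * t ^+ 2))%:E)%E.
Proof.
move=> s0 t0.
rewrite normal_density; last 2 first.
- by move=> x; rewrite lee_fin le_max lexx.
- by apply/measurable_EFinP; exact: mmax.
apply: (@le_trans _ _ (\int[mu]_(x in `[t, +oo[) (x * normal_pdf 0 s x)%:E)%E); last first.
  rewrite tail_int// lee_fin ler_wpM2r ?expR_ge0//.
  exact: peak_le.
rewrite [X in (_ <= X)%E]integral_mkcond.
apply: ge0_le_integral => //.
- by move=> x _; rewrite -EFinM lee_fin mulr_ge0 ?normal_pdf_ge0// le_max lexx.
- apply: emeasurable_funM.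
    by apply/measurable_EFinP; exact: mmax.
  by apply/measurable_EFinP; exact: measurable_normal_pdf.
- apply/(measurable_restrictT _ _).1 => //.
  apply/measurable_EFinP.
  have := measurable_funM (@measurable_id _ R setT) (measurable_normal_pdf 0 s).
  by apply: measurable_funS.
- move=> x _; rewrite patchE; case: ifPn.
    rewrite inE /= in_itv /= andbT => tx.
    rewrite -EFinM lee_fin ler_wpM2r ?normal_pdf_ge0//.
    rewrite ge_max (le_trans t0 tx); lra.
  move=> xn.
  have xt : x < t.
    rewrite ltNge; apply/negP => tx; move/negP: xn; apply.
    by rewrite inE /= in_itv /= andbT.
  rewrite -EFinM lee_fin.
  have -> : Num.max 0 (x - t) = 0 by apply/max_idPl; lra.
  by rewrite mul0r.
Qed.
End S.

Section C.
Context {R : realType}.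
Local Open Scope ereal_scope.

Lemma coord_law d (T : measurableType d) (P : probability T R) m
  (Y : 'I_m -> T -> R) (S : 'M[R]_m) i (A : set R) : gaussian_vector P Y S ->
  measurable A -> P (Y i @^-1` A) = centered_normal_law (S i i) A.
Proof.
move=> [mY hY] mA.
have := hY (fun j => (j == i)%:R) A mA.
have -> : (fun w => \sum_(j < m) (j == i)%:R * Y j w)%R = Y i.
  apply/funext => w; rewrite (bigD1 i)//= eqxx mul1r big1 ?addr0//.
  by move=> j /negbTE ->; rewrite mul0r.
move=> ->; congr centered_normal_law.
rewrite (bigD1 i)//= [X in (_ + X)%R]big1; last first.
  by move=> j /negbTE ->; rewrite big1// => k _; rewrite !mul0r.
rewrite addr0 (bigD1 i)//= [X in (_ + X)%R]big1 ?addr0 ?eqxx ?mul1r//.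
by move=> j /negbTE ->; rewrite mulr0 mul0r.
Qed.


Lemma coord_bound d (T : measurableType d) (P : probability T R) m
  (Y : 'I_m -> T -> R) (S : 'M[R]_m) i (t : R) : gaussian_vector P Y S ->
  (0 <= S i i)%R -> (0 <= t)%R ->
  \int[P]_w (Num.max 0 (Y i w - t))%:E <=
  (Num.sqrt (S i i) * expR (- (Num.sqrt (S i i) ^+ 2 *+ 2)^-1 * t ^+ 2))%:E.
Proof.
move=> gY v0 t0.
have mYi : measurable_fun setT (Y i : T -> measurableTypeR R) := gY.1 i.
have -> : \int[P]_w (Num.max 0 (Y i w - t))%:E =
    \int[@pushforward _ _ T (measurableTypeR R) R P (Y i)]_x (Num.max 0 (x - t))%:E.
  rewrite (@ge0_integral_pushforward _ _ T (measurableTypeR R) R (Y i) mYi P).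
  - by [].
  - exact: measurableT.
  - apply: measurableT_comp => //; exact: mmax.
  - by move=> x _; rewrite lee_fin le_max lexx.
have [vpos|vle0] := ltrP 0 (S i i).
- rewrite (eq_measure_integral (normal_prob 0 (Num.sqrt (S i i)))); last first.
    move=> A mA _; transitivity (centered_normal_law (S i i) A).
      exact: (@coord_law _ _ P m Y S i A gY mA).
    by rewrite /centered_normal_law vpos.
  by apply: normal_excess => //; rewrite sqrtr_gt0.
- have v0' : S i i = 0%R by apply/le_anti; rewrite vle0 v0.
  rewrite (eq_measure_integral (@dirac _ (measurableTypeR R) 0%R R)); last first.
    move=> A mA _; transitivity (centered_normal_law (S i i) A).
      exact: (@coord_law _ _ P m Y S i A gY mA).
    by rewrite /centered_normal_law v0' ltxx.
  rewrite integral_dirac//; last by apply/measurable_EFinP; exact: mmax.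
  rewrite diracE mem_set// mul1e v0' sqrtr0 mul0r lee_fin.
  by rewrite sub0r ge_max lexx oppr_le0.
Qed.
End C.

Section A.
Context {R : realType}.
Lemma arith (L sg eps : R) : 1 <= L -> 0 < sg -> sg <= eps -> eps = expR (- L) ->
  sg * expR (- (sg ^+ 2 *+ 2)^-1 * (2 * eps * Num.sqrt L) ^+ 2) <= sg ^+ 2 * eps.
Proof.
move=> L1 sg0 sge hL.

set u := eps / sg.
have u1 : 1 <= u by rewrite /u ler_pdivlMr// mul1r.
have epsu : eps = u * sg by rewrite /u divfK// gt_eqF.
have sgn : sg != 0 by rewrite gt_eqF.
have e1 : (sg^+2*+2)^-1 * (2*eps*Num.sqrt L)^+2 = 2 * L * u^+2.
  rewrite exprMn sqr_sqrtr; last lra.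
  rewrite epsu -mulr_natr; field.
  by [].
rewrite mulNr e1.
have key : u <= expR (2 * L * (u ^+ 2 - 1)).
  apply: le_trans (expR_ge1Dx _).
  have h1 : 0 <= (L - 1) * (u ^+ 2 - 1) by rewrite mulr_ge0 //; nra.
  nra.
rewrite (_ : - (2 * L * u ^+ 2) = - (2 * L) + - (2 * L * (u ^+ 2 - 1))); last by ring.
rewrite expRD.
have -> : expR (- (2 * L)) = eps ^+ 2.
  by rewrite hL expr2 -expRD; congr expR; ring.
rewrite expRN.
set E := expR (2 * L * (u ^+ 2 - 1)) in key *.
have E0 : 0 < E by rewrite /E expR_gt0.
have hE : u / E <= 1 by rewrite ler_pdivrMr// mul1r.
have -> : sg * (eps ^+ 2 * E^-1) = (sg ^+ 2 * eps) * (u / E).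
  by rewrite epsu; ring.
apply: ler_piMr => //.
rewrite mulr_ge0 ?exprn_ge0 //; lra.
Qed.
End A.

Lemma mbigmax (R : realType) d (T : measurableType d) m (Y : 'I_m -> T -> R) :
  (forall i, measurable_fun setT (Y i)) ->
  measurable_fun setT (fun w => \big[Num.max/0]_(i < m) Y i w).
Proof.
move=> mY.
have H : forall s : seq 'I_m,
    measurable_fun setT (fun w => \big[Num.max/0]_(i <- s) Y i w).
  elim => [|a s IH].
    by under eq_fun do rewrite big_nil; exact: measurable_cst.
  under eq_fun do rewrite big_cons.
  have -> : (fun w => Num.max (Y a w) (\big[Num.max/0]_(j <- s) Y j w)) =
     (Y a) \max (fun w => \big[Num.max/0]_(j <- s) Y j w) by [].
  exact: measurable_maxr.
exact: H.
Qed.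

Theorem lemma1 (R : realType) :
  exists (C : R) (eps0 : R), 0 < C /\ 0 < eps0 /\
  forall (eps : R) (m : nat) (d : measure_display) (T : measurableType d)
         (P : probability T R) (Y : 'I_m -> T -> R) (S : 'M[R]_m),
    0 < eps < 1 -> eps < eps0 -> (0 < m)%N ->
    gaussian_vector P Y S ->
    (forall i, 0 <= S i i <= eps ^+ 2) ->
    \sum_(i < m) S i i <= 1 ->
    ('E_P[(fun w => Num.max 0 (\big[Num.max/0]_(i < m) Y i w))%R]
       <= (C * (eps * Num.sqrt (ln eps^-1)))%:E)%E.
Proof.
exists 3, (expR (-1)); split => //; split; first exact: expR_gt0.
move=> eps m d T P Y S /andP[e0 e1] ee0 m0 gY hS hsum.
have epos : eps \in Num.pos by rewrite posrE.
set L := ln eps^-1.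
have L1 : 1 <= L.
  rewrite /L lnV//.
  have : ln eps < -1 by rewrite -[-1]expRK ltr_ln ?posrE ?expR_gt0.
  lra.
have hL : eps = expR (- L) by rewrite /L lnV// opprK lnK.
set r := Num.sqrt L.
have r1 : 1 <= r by rewrite /r -sqrtr1 ler_sqrt; lra.
set t := 2 * eps * r.
have t0 : 0 <= t by rewrite /t !mulr_ge0 //; lra.
have mY := gY.1.
have mg i : measurable_fun setT (fun w => (Num.max 0 (Y i w - t))%:E).
  apply/measurable_EFinP.
  exact: (measurableT_comp (mmax t) (mY i)).
rewrite unlock.
apply: (@le_trans _ _ (\int[P]_w (t%:E + \sum_(i < m) (Num.max 0 (Y i w - t))%:E))%E).
  apply: ge0_le_integral => //.
  - by move=> w _; rewrite lee_fin le_max lexx.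
  - apply/measurable_EFinP.
    have -> : (fun w => Num.max 0 (\big[Num.max/0]_(i < m) Y i w)) =
      (cst 0) \max (fun w => \big[Num.max/0]_(i < m) Y i w) by [].
    apply: measurable_maxr => //.
    exact: mbigmax.
  - apply: emeasurable_funD => //.
    exact: emeasurable_sum.
  - move=> w _.
    rewrite sumEFin -EFinD lee_fin.
    have s0 : 0 <= \sum_(i < m) Num.max 0 (Y i w - t).
      by apply: sumr_ge0 => i _; rewrite le_max lexx.
    rewrite ge_max; apply/andP; split; first lra.
    apply: bigmax_le; first lra.
    move=> i _.
    rewrite (bigD1 i)//=.
    have : 0 <= \sum_(j < m | j != i) Num.max 0 (Y j w - t).
      by apply: sumr_ge0 => j _; rewrite le_max lexx.
    have : Y i w - t <= Num.max 0 (Y i w - t) by rewrite le_max lexx orbT.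
    lra.
rewrite ge0_integralD; [|exact: measurableT|by move=> w _; rewrite lee_fin|exact: measurable_cst|by move=> w _; rewrite sume_ge0// => i _; rewrite lee_fin le_max lexx|exact: emeasurable_sum].
rewrite integral_cst //.
set PT := (X in (t%:E * X)%E).
have -> : PT = 1%E by exact: probability_setT P.
rewrite mule1.
rewrite ge0_integral_sum //; last first.
  by move=> i w _; rewrite lee_fin le_max lexx.
apply: (@le_trans _ _ (t%:E + \sum_(i < m) (S i i * eps)%:E)%E).
  rewrite leeD2l //.
  apply: lee_sum => i _.
  case/andP: (hS i) => v0 ve.
  have hb : (\int[P]_w (Num.max 0 (Y i w - t))%:E <=
     (Num.sqrt (S i i) * expR (- (Num.sqrt (S i i) ^+ 2 *+ 2)^-1 * t ^+ 2))%:E)%E.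
    exact: (@coord_bound _ _ _ P _ _ _ i t gY v0 t0).
  apply: le_trans hb _.
  have [vpos|vle0] := ltrP 0 (S i i).
    have sg0 : 0 < Num.sqrt (S i i) by rewrite sqrtr_gt0.
    have sge : Num.sqrt (S i i) <= eps.
      by rewrite -(ger0_norm (ltW e0)) -sqrtr_sqr ler_sqrt// sqr_ge0.
    have := @arith _ L _ eps L1 sg0 sge hL.
    by rewrite sqr_sqrtr// lee_fin.
  have v0' : S i i = 0 by apply/le_anti; rewrite vle0 v0.
  by rewrite v0' sqrtr0 !mul0r.
rewrite sumEFin -EFinD lee_fin -mulr_suml.
have : (\sum_(i < m) S i i) * eps <= eps by rewrite ler_piMl //; lra.
rewrite /t; nra.
Qed.
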